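(* Let $\Phi$ be a finite crystallographic root system with simple roots $\Delta$ and Weyl group $W$, let $\Gamma\subseteq\Delta$ with parabolic subgroup $W_\Gamma$, and let $\beta\in\Phi^+_\Gamma$. Then the random variable $\mathcal{X}_\beta$ is the same when considered on $W$ as when considered on $W_\Gamma$, i.e. \[ \frac{|\{w\in W: w(\beta)\in\Phi^-\}|}{|W|}=\frac{|\{w\in W_\Gamma: w(\beta)\in\Phi^-\}|}{|W_\Gamma|}. \]
   Context: $\Phi^+$ are the positive roots and $\Phi^-=-\Phi^+$. $W_\Gamma=\langle s_\alpha:\alpha\in\Gamma\rangle$ and $\Phi^+_\Gamma=\Phi^+\cap\operatorname{span}(\Gamma)$. For a group $G\in\{W,W_\Gamma\}$ with the uniform distribution, $\mathcal{X}_\beta$ is the Bernoulli random variable with $\mathcal{X}_\beta(w)=1$ if $w(\beta)\in\Phi^-$ and $0$ otherwise. *)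

(* Defs.v *)
From HB Require Import structures.
From mathcomp Require Import all_boot all_order all_algebra.
From mathcomp Require Import boolp.
Set Implicit Arguments. Unset Strict Implicit. Unset Printing Implicit Defensive.
Import Order.TTheory GRing.Theory Num.Theory.
Local Open Scope ring_scope.

Definition dot (R : realFieldType) (n : nat) (u v : 'rV[R]_n) : R :=
  (u *m v^T) 0 0.

(* matrix of the orthogonal reflection s_a (acting on row vectors: v *m M) :
   v |-> v - (2 <v,a>/<a,a>) a *)
Definition refl_mx (R : realFieldType) (n : nat) (a : 'rV[R]_n) : 'M[R]_n :=
  1%:M - (2 / dot a a) *: (a^T *m a).

Definition is_root_system (R : realFieldType) (n : nat) (Phi : seq 'rV[R]_n)
  : Prop :=
  [/\ 0 \notin Phi,
      (<<Phi>>%VS = fullv),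
      (forall a b, a \in Phi -> b \in Phi -> b *m refl_mx a \in Phi),
      (forall a b, a \in Phi -> b \in Phi ->
         exists z : int, 2 * dot b a / dot a a = z%:~R) &
      (forall a (c : R), a \in Phi -> c *: a \in Phi -> c = 1 \/ c = -1)].

Definition nonneg_int_comb (R : realFieldType) (n : nat)
  (Delta : seq 'rV[R]_n) (v : 'rV[R]_n) : Prop :=
  exists c : 'I_(size Delta) -> nat,
    v = \sum_(i < size Delta) (c i)%:R *: Delta`_i.

Definition is_simple_system (R : realFieldType) (n : nat)
  (Phi Delta : seq 'rV[R]_n) : Prop :=
  [/\ {subset Delta <= Phi}, free Delta &
      (forall a, a \in Phi ->
         nonneg_int_comb Delta a \/ nonneg_int_comb Delta (- a))].

Definition pos_root (R : realFieldType) (n : nat)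
  (Phi Delta : seq 'rV[R]_n) (v : 'rV[R]_n) : Prop :=
  v \in Phi /\ nonneg_int_comb Delta v.

Definition neg_root (R : realFieldType) (n : nat)
  (Phi Delta : seq 'rV[R]_n) (v : 'rV[R]_n) : Prop :=
  pos_root Phi Delta (- v).

(* the group generated by the reflections s_a, a in S
   (the monoid closure equals the group closure since s_a are involutions) *)
Inductive gen_refl (R : realFieldType) (n : nat) (S : seq 'rV[R]_n)
  : 'M[R]_n -> Prop :=
| gen_refl1 : gen_refl S 1%:M
| gen_reflM : forall a M, a \in S -> gen_refl S M ->
    gen_refl S (M *m refl_mx a).

(* empirical probability that w(beta) is a negative root, w uniform in the
   group enumerated (without repetition) by sG *)
Definition prob_neg (R : realFieldType) (n : nat)
  (Phi Delta : seq 'rV[R]_n) (beta : 'rV[R]_n) (sG : seq 'M[R]_n) : R :=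
  (count (fun M => `[< neg_root Phi Delta (beta *m M) >]) sG)%:R
    / (size sG)%:R.

(* Main.v *)
Require Import Defs.
From HB Require Import structures.
From mathcomp Require Import all_boot all_order all_algebra.
From mathcomp Require Import boolp.
From mathcomp.algebra_tactics Require Import ring lra.
Set Implicit Arguments. Unset Strict Implicit. Unset Printing Implicit Defensive.
Import Order.TTheory GRing.Theory Num.Theory.
Local Open Scope ring_scope.

Section Aux.
Variables (R : realFieldType) (n : nat).
Implicit Types (u v w a b : 'rV[R]_n).

Lemma dotDl u v w : dot (u + v) w = dot u w + dot v w.
Proof. by rewrite /dot mulmxDl mxE. Qed.
Lemma dotZl k u w : dot (k *: u) w = k * dot u w.
Proof. by rewrite /dot -scalemxAl mxE. Qed.
Lemma dotNl u w : dot (- u) w = - dot u w.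
Proof. by rewrite /dot mulNmx mxE. Qed.
Lemma dotBl u v w : dot (u - v) w = dot u w - dot v w.
Proof. by rewrite dotDl dotNl. Qed.
Lemma dot_suml I (r : seq I) (P : pred I) (F : I -> 'rV[R]_n) w :
  dot (\sum_(i <- r | P i) F i) w = \sum_(i <- r | P i) dot (F i) w.
Proof. by rewrite /dot mulmx_suml summxE. Qed.
Lemma dotC u v : dot u v = dot v u.
Proof.
rewrite /dot -[u *m v^T]trmxK trmx_mul trmxK [in LHS]mxE //.
Qed.

Lemma dot_eq0 v : dot v v = 0 -> v = 0.
Proof.
rewrite /dot mxE => H.
have H2 : \sum_j v 0 j * v 0 j = 0.
  by rewrite -[RHS]H; apply: eq_bigr => j _; rewrite mxE.
apply/rowP => j; rewrite mxE.
have Hp : forall i : 'I_n, true -> 0 <= v 0 i * v 0 i.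
  move=> i _; by rewrite -expr2 sqr_ge0.
have := psumr_eq0P Hp H2 => /(_ j isT).
by move/eqP; rewrite mulf_eq0 orbb => /eqP.
Qed.

Lemma dot_gt0 v : v != 0 -> 0 < dot v v.
Proof.
move=> nz; rewrite lt_def; apply/andP; split.
  by apply/eqP => /dot_eq0 /eqP; rewrite (negbTE nz).
rewrite /dot mxE; apply: sumr_ge0 => j _; rewrite mxE; by rewrite -expr2 sqr_ge0.
Qed.

Lemma refl_app b a : b *m refl_mx a = b - (2 * dot b a / dot a a) *: a.
Proof.
rewrite /refl_mx mulmxBr mulmx1 -scalemxAr mulmxA [b *m a^T]mx11_scalar.
rewrite mul_scalar_mx scalerA; congr (_ - _ *: _).
by rewrite /dot mulrAC.
Qed.

Lemma refl_self a : dot a a != 0 -> a *m refl_mx a = - a.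
Proof.
move=> nz; rewrite refl_app mulfK // scaler_nat mulr2n opprD addrA subrr add0r //.
Qed.

Lemma refl_invol_v v a : dot a a != 0 -> v *m refl_mx a *m refl_mx a = v.
Proof.
move=> nz; rewrite !refl_app.
set k := 2 * dot v a / dot a a.
have -> : 2 * dot (v - k *: a) a / dot a a = - k.
  rewrite dotBl dotZl /k; field; exact: nz.
by rewrite scaleNr opprK subrK.
Qed.

Lemma refl_invol a : dot a a != 0 -> refl_mx a *m refl_mx a = 1%:M.
Proof.
move=> nz; apply/row_matrixP => i.
rewrite row_mul (_ : row i (refl_mx a) = row i 1%:M *m refl_mx a).
  by rewrite refl_invol_v.
by rewrite -row_mul mul1mx.
Qed.


Lemma gen_reflMM (S : seq 'rV[R]_n) A B :
  gen_refl S A -> gen_refl S B -> gen_refl S (A *m B).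
Proof.
move=> hA; elim=> [|a M aS _ IH]; first by rewrite mulmx1.
by rewrite mulmxA; apply: gen_reflM.
Qed.

Lemma gen_refl_refl (S : seq 'rV[R]_n) a : a \in S -> gen_refl S (refl_mx a).
Proof. by move=> aS; rewrite -(mul1mx (refl_mx a)); apply: gen_reflM => //; apply: gen_refl1. Qed.

Lemma gen_refl_inv (S : seq 'rV[R]_n) :
  (forall a, a \in S -> dot a a != 0) ->
  forall M, gen_refl S M -> exists2 N, gen_refl S N & N *m M = 1%:M.
Proof.
move=> hS M0; elim=> [|a M aS _ [N hN NM]].
  by exists 1%:M; [apply: gen_refl1 | rewrite mulmx1].
exists (refl_mx a *m N); first by apply: gen_reflMM => //; apply: gen_refl_refl.
by rewrite mulmxA -(mulmxA (refl_mx a)) NM mulmx1 refl_invol // hS.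
Qed.

Lemma gen_refl_root (S Phi : seq 'rV[R]_n) :
  {subset S <= Phi} ->
  (forall a b, a \in Phi -> b \in Phi -> b *m refl_mx a \in Phi) ->
  forall M, gen_refl S M -> forall b, b \in Phi -> b *m M \in Phi.
Proof.
move=> sub cl M; elim=> [|a M' aS _ IH] b bP; first by rewrite mulmx1.
by rewrite mulmxA; apply: cl; [apply: sub | apply: IH].
Qed.

Lemma count_mulL (S : seq 'rV[R]_n) (sG : seq 'M[R]_n) N (P : pred 'M[R]_n) :
  (forall a, a \in S -> dot a a != 0) ->
  uniq sG -> (forall M, M \in sG <-> gen_refl S M) -> gen_refl S N ->
  count (fun M => P (N *m M)) sG = count P sG.
Proof.
move=> hS uG hG hN.
have [N' _ hN'] := gen_refl_inv hS hN.
have inj : injective (fun M : 'M[R]_n => N *m M).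
  by move=> x y /(congr1 (mulmx N')); rewrite !mulmxA hN' !mul1mx.
have sub : {subset map (fun M => N *m M) sG <= sG}.
  move=> x /mapP [M hM ->]; apply/hG; apply: gen_reflMM => //; exact/hG.
have hsz : (size sG <= size (map (fun M => N *m M) sG))%N by rewrite size_map.
have um : uniq (map (fun M => N *m M) sG) by rewrite map_inj_uniq.
have [_ eqm] := uniq_min_size um sub hsz.
have pe : perm_eq (map (fun M => N *m M) sG) sG.
  exact: uniq_perm um uG eqm.
by rewrite -(permP pe P) count_map.
Qed.

Lemma coef_uniq (Delta : seq 'rV[R]_n) (x y : 'I_(size Delta) -> R) :
  free Delta ->
  \sum_(i < size Delta) x i *: Delta`_i = \sum_(i < size Delta) y i *: Delta`_i ->
  forall i, x i = y i.
Proof.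
move=> /(@freeP _ _ _ (in_tuple Delta)) hf E i; apply/eqP; rewrite -subr_eq0; apply/eqP.
apply: (hf (fun i => x i - y i)).
by rewrite (eq_bigr (fun i => x i *: Delta`_i - y i *: Delta`_i)) ?sumrB ?E ?subrr // => j _; rewrite scalerBl.
Qed.

Lemma pos_neg_excl (Delta : seq 'rV[R]_n) v :
  free Delta -> nonneg_int_comb Delta v -> nonneg_int_comb Delta (- v) -> v = 0.
Proof.
move=> hf [c hc] [e he].
have E : \sum_(i < size Delta) ((c i + e i)%:R : R) *: Delta`_i =
         \sum_(i < size Delta) (0 : R) *: Delta`_i.
  rewrite (eq_bigr (fun i => (c i)%:R *: Delta`_i + (e i)%:R *: Delta`_i)); last first.
    by move=> i _; rewrite natrD scalerDl.
  by rewrite big_split /= -hc -he subrr big1 // => i _; rewrite scale0r.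
have h := coef_uniq hf E.
rewrite hc big1 // => i _.
have /eqP := h i; rewrite pnatr_eq0 addn_eq0 => /andP [/eqP -> _].
by rewrite scale0r.
Qed.


Lemma delta_sum (Delta : seq 'rV[R]_n) (i : 'I_(size Delta)) :
  Delta`_i = \sum_(j < size Delta) ((j == i)%:R : R) *: Delta`_j.
Proof.
rewrite (bigD1 i) //= eqxx scale1r big1 ?addr0 // => j /negbTE ->.
by rewrite scale0r.
Qed.

Lemma support (Delta Gamma : seq 'rV[R]_n) (x : 'I_(size Delta) -> R) i :
  free Delta -> {subset Gamma <= Delta} ->
  \sum_(j < size Delta) x j *: Delta`_j \in <<Gamma>>%VS -> x i != 0 ->
  Delta`_i \in Gamma.
Proof.
move=> hf sub hv nz; apply/negPn/negP => notin; move/negP: nz; apply.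
have hv' : \sum_(j < size Delta) x j *: Delta`_j \in <<in_tuple Gamma>>%VS by [].
have E := coord_span hv'.
set d := fun j => coord (in_tuple Gamma) j (\sum_(j < size Delta) x j *: Delta`_j) in E.
have hG : forall j : 'I_(size Gamma), Gamma`_j =
    \sum_(k < size Delta) ((Gamma`_j == Delta`_k)%:R : R) *: Delta`_k.
  move=> j.
  have gD : Gamma`_j \in Delta by apply: sub; apply: mem_nth.
  rewrite (bigD1 (Ordinal (etrans (index_mem _ _) gD))) //= nth_index // eqxx scale1r.
  rewrite big1 ?addr0 // => k hk.
  case: eqP => [e|_]; last by rewrite scale0r.
  exfalso; move/eqP: hk; apply; apply/val_inj => /=.
  by rewrite e index_uniq // free_uniq.
have E2 : \sum_(j < size Delta) x j *: Delta`_j =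
   \sum_(k < size Delta) (\sum_(j < size Gamma) d j * (Gamma`_j == Delta`_k)%:R) *: Delta`_k.
  rewrite [LHS]E.
  under eq_bigr do rewrite hG scaler_sumr.
  rewrite exchange_big; apply: eq_bigr => k _; rewrite scaler_suml.
  by apply: eq_bigr => j _; rewrite scalerA.
rewrite (coef_uniq hf E2 i) big1 // => j _.
case: eqP => [e|]; last by rewrite mulr0.
by move: notin; rewrite -e mem_nth.
Qed.


Lemma orbit (Phi Delta Gamma : seq 'rV[R]_n) :
  is_root_system Phi -> is_simple_system Phi Delta -> {subset Gamma <= Delta} ->
  forall h (c : 'I_(size Delta) -> nat) beta, (\sum_i c i < h)%N ->
  beta = \sum_i (c i)%:R *: Delta`_i ->
  beta \in Phi -> beta \in <<Gamma>>%VS ->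
  exists2 a, a \in Gamma & exists2 N, gen_refl Gamma N & beta = a *m N.
Proof.
move=> [P0 _ Pcl _ Pred] [DP hf Dex] sub.
elim=> [//|h IH] c beta hc Eb bP bG.
have bnz : beta != 0 by apply/eqP => e; move: P0; rewrite -e bP.
have dpos := dot_gt0 bnz.
have Es : dot beta beta = \sum_i (c i)%:R * dot Delta`_i beta.
  by rewrite {1}Eb dot_suml; apply: eq_bigr => i _; rewrite dotZl.
have [i hi] : exists i, 0 < (c i)%:R * dot Delta`_i beta.
  case: (boolP [exists i, 0 < (c i)%:R * dot Delta`_i beta]) => [/existsP //|/existsPn H].
  exfalso.
  have : \sum_i (c i)%:R * dot Delta`_i beta <= 0.
    by apply: sumr_le0 => j _; rewrite leNgt H.
  by rewrite leNgt -Es dpos.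
have ci0 : (c i)%:R != 0 :> R.
  by apply: contraTneq hi => ->; rewrite mul0r ltxx.
have c0 : 0 < (c i)%:R :> R by rewrite lt_def ci0 ler0n.
have dgt : 0 < dot Delta`_i beta by rewrite (pmulr_rgt0 _ c0) in hi.
have gG : Delta`_i \in Gamma.
  by apply: (support (x := fun j => (c j)%:R)) => //; rewrite -Eb.
set g := Delta`_i in gG dgt *.
have gP : g \in Phi by apply: DP; apply: sub.
have gnz : g != 0 by apply/eqP => e; move: P0; rewrite -e gP.
have gpos := dot_gt0 gnz.
set k := 2 * dot beta g / dot g g.
have kpos : 0 < k by rewrite /k divr_gt0 ?mulr_gt0 ?ltr0n // dotC.
have b'P : beta *m refl_mx g \in Phi := Pcl g beta gP bP.
have Eb' : beta *m refl_mx g = beta - k *: g := refl_app _ _.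
have Eb'2 : beta *m refl_mx g =
    \sum_j ((c j)%:R - k * (j == i)%:R) *: Delta`_j.
  rewrite Eb' {1}Eb /g (delta_sum i) scaler_sumr -sumrB.
  by apply: eq_bigr => j _; rewrite scalerA scalerBl.
case: (Dex _ b'P) => [[e He] | [e He]].
- have hcoef := coef_uniq hf (etrans (esym He) Eb'2).
  have hlt : (\sum_j e j < \sum_j c j)%N.
    rewrite -(ltr_nat R) !natr_sum (eq_bigr _ (fun j _ => hcoef j)) sumrB.
    have -> : \sum_(j < size Delta) k * (j == i)%:R = k.
      rewrite (bigD1 i) //= eqxx mulr1 big1 ?addr0 // => j /negbTE ->.
      by rewrite mulr0.
    by rewrite ltrBlDr ltrDl.
  have b'G : beta *m refl_mx g \in <<Gamma>>%VS.
    by rewrite Eb'; apply: memvB => //; apply: memvZ; apply: memv_span.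
  have [a aG [N hN EN]] := IH e _ (leq_trans hlt (ltnSE hc)) He b'P b'G.
  exists a => //; exists (N *m refl_mx g); first by apply: gen_reflM.
  by rewrite mulmxA -EN refl_invol_v // gt_eqF.
- have E3 : \sum_j (e j)%:R *: Delta`_j =
            \sum_j (k * (j == i)%:R - (c j)%:R) *: Delta`_j.
    rewrite -He Eb'2 -sumrN; apply: eq_bigr => j _.
    by rewrite -scaleNr opprB.
  have hcoef := coef_uniq hf E3.
  have Ebg : beta = (c i)%:R *: g.
    rewrite Eb (bigD1 i) //= big1 ?addr0 // => j hj.
    have := hcoef j; rewrite (negbTE hj) mulr0 => h'.
    have : (c j)%:R = 0 :> R.
      by have := ler0n R (e j); have := ler0n R (c j); lra.
    by move->; rewrite scale0r.
  have := Pred g ((c i)%:R) gP; rewrite -Ebg => /(_ bP) [c1 | cm1].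
    exists g => //; exists 1%:M; first exact: gen_refl1.
    by rewrite mulmx1 Ebg c1 scale1r.
  by exfalso; have := ler0n R (c i); lra.
Qed.

Lemma half_count (Phi Delta S : seq 'rV[R]_n) (sG : seq 'M[R]_n) a :
  is_root_system Phi -> is_simple_system Phi Delta -> {subset S <= Phi} ->
  uniq sG -> (forall M, M \in sG <-> gen_refl S M) -> a \in S ->
  ((count (fun M => `[< neg_root Phi Delta (a *m M) >]) sG).*2 = size sG)%N.
Proof.
move=> [P0 _ Pcl _ _] [DP hf Dex] sub uG hG aS.
have nz : forall b, b \in Phi -> b != 0.
  by move=> b bP; apply/eqP => e; move: P0; rewrite -e bP.
have hS : forall b, b \in S -> dot b b != 0.
  by move=> b /sub bP; rewrite gt_eqF // dot_gt0 // nz.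
set negp := fun M => `[< neg_root Phi Delta (a *m M) >].
set posp := fun M => `[< pos_root Phi Delta (a *m M) >].
have e1 : count negp sG = count posp sG.
  rewrite -(count_mulL negp hS uG hG (gen_refl_refl aS)).
  apply: eq_count => M; rewrite /negp /posp mulmxA refl_self ?hS //.
  by rewrite mulNmx /neg_root opprK.
have e2 : count posp sG = count (predC negp) sG.
  apply: eq_in_count => M /hG hM /=.
  have vP : a *m M \in Phi := gen_refl_root sub Pcl hM (sub _ aS).
  rewrite /posp /negp /neg_root /pos_root.
  case: (Dex _ vP) => hv.
    rewrite asboolT // asboolF //; move=> [_ hn].
    by move: (nz _ vP); rewrite (pos_neg_excl hf hv hn) eqxx.
  have vN : - (a *m M) \in Phi.
    by rewrite -refl_self ?gt_eqF ?dot_gt0 ?nz //; apply: Pcl.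
  rewrite asboolF ?asboolT //; move=> [_ hp].
  by move: (nz _ vP); rewrite (pos_neg_excl hf hp hv) eqxx.
have := count_predC negp sG.
by rewrite -e2 -e1 addnn.
Qed.

End Aux.

Lemma half_prob (R : realFieldType) (c s : nat) :
  (c.*2 = s)%N -> (0 < s)%N -> (c%:R / s%:R : R) = 2^-1.
Proof.
move=> <-; rewrite double_gt0 => hc.
have hc' : c%:R != 0 :> R by rewrite pnatr_eq0 -lt0n.
rewrite -muln2 natrM; field.
by [].
Qed.

Theorem corollary3p7 (R : realFieldType) (n : nat)
  (Phi Delta Gamma : seq 'rV[R]_n) (beta : 'rV[R]_n)
  (sW sWGamma : seq 'M[R]_n) :
  is_root_system Phi ->
  is_simple_system Phi Delta ->
  {subset Gamma <= Delta} ->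
  pos_root Phi Delta beta ->
  beta \in <<Gamma>>%VS ->
  uniq sW -> (forall M, M \in sW <-> gen_refl Phi M) ->
  uniq sWGamma -> (forall M, M \in sWGamma <-> gen_refl Gamma M) ->
  prob_neg Phi Delta beta sW = prob_neg Phi Delta beta sWGamma.
Proof.
move=> hR hS sub [bP [c Eb]] bG uW hW uG hG.
have GP : {subset Gamma <= Phi} by move=> x /sub; case: hS => DP _ _; apply: DP.
have hW1 : (0 < size sW)%N.
  have : 1%:M \in sW by apply/hW; exact: gen_refl1.
  by case: (sW).
have hG1 : (0 < size sWGamma)%N.
  have : 1%:M \in sWGamma by apply/hG; exact: gen_refl1.
  by case: (sWGamma).
rewrite /prob_neg.
rewrite (@half_prob R _ _ (half_count hR hS (fun x (h : x \in Phi) => h) uW hW bP) hW1).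
have [a aG [N hN EN]] := orbit hR hS sub (ltnSn _) Eb bP bG.
have hSn : forall b, b \in Gamma -> dot b b != 0.
  move=> b /GP bP'; case: hR => P0 _ _ _ _.
  by rewrite gt_eqF // dot_gt0 //; apply/eqP => e; move: P0; rewrite -e bP'.
have -> : count (fun M => `[< neg_root Phi Delta (beta *m M) >]) sWGamma =
          count (fun M => `[< neg_root Phi Delta (a *m M) >]) sWGamma.
  rewrite -(count_mulL (fun M => `[< neg_root Phi Delta (a *m M) >]) hSn uG hG hN).
  by apply: eq_count => M /=; rewrite mulmxA -EN.
by rewrite (@half_prob R _ _ (half_count hR hS GP uG hG aG) hG1).
Qed.
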